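(* Let $\mathfrak g\xrightarrow{\mu}\mathfrak h$ be a crossed module of Lie algebras, $\phi:W\to V$ linear, $\rho$ a 2-representation on $\phi$, and $r>2$. Then on $C^{p,q}_r(\mathfrak g_1,\phi)$, $$\delta^{(r-1)}\circ\Delta+\Delta\circ\delta^{(r)}=\delta_{(1)}\circ\Delta_2-\Delta_2\circ\delta_{(1)}\qquad\text{and}\qquad\Delta^2=-(\Delta_2\circ\partial+\partial\circ\Delta_2).$$
   Context: Crossed module: Lie algebras $\mathfrak g,\mathfrak h$, Lie homomorphism $\mu$, action $\mathcal L:\mathfrak h\to\mathrm{Der}(\mathfrak g)$ with $\mu(\mathcal L_yx)=[y,\mu(x)]$, $\mathcal L_{\mu(x_0)}x_1=[x_0,x_1]$; $\mathfrak g\oplus_{\mathcal L}\mathfrak h$ has bracket $[(x_0,y_0),(x_1,y_1)]=([x_0,x_1]+\mathcal L_{y_0}x_1-\mathcal L_{y_1}x_0,[y_0,y_1])$. 2-representation: linear $\rho_0^1:\mathfrak h\to\mathfrak{gl}(W)$, $\rho_0^0:\mathfrak h\to\mathfrak{gl}(V)$, $\rho_1:\mathfrak g\to\mathrm{Hom}(V,W)$ with $\rho_0^1,\rho_0^0$ representations, $\phi\rho_0^1(y)=\rho_0^0(y)\phi$, $\rho_1([x_0,x_1])=\rho_1(x_0)\phi\rho_1(x_1)-\rho_1(x_1)\phi\rho_1(x_0)$, $\rho_0^0(\mu(x))=\phi\rho_1(x)$, $\rho_0^1(\mu(x))=\rho_1(x)\phi$, $\rho_1(\mathcal L_yx)=\rho_0^1(y)\rho_1(x)-\rho_1(x)\rho_0^0(y)$.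 $\mathfrak g_0=\mathfrak h$; for $p\ge1$, $\mathfrak g_p=\mathfrak g^p\oplus\mathfrak h$, elements $(x^0,\dots,x^{p-1};y)$, a Lie algebra via identification with composable strings $(a_0,\dots,a_{p-1})\in(\mathfrak g\oplus_{\mathcal L}\mathfrak h)^p$, $a_j=(x^j,y+\sum_{k>j}\mu(x^k))$, componentwise bracket. Face maps $\partial_k:\mathfrak g_{p+1}\to\mathfrak g_p$: $\partial_0(x^0,\dots,x^p;y)=(x^1,\dots,x^p;y)$, $\partial_k(\dots)=(x^0,\dots,x^{k-1}+x^k,\dots,x^p;y)$ ($0<k\le p$), $\partial_{p+1}(\dots)=(x^0,\dots,x^{p-1};y+\mu(x^p))$, componentwise on tuples; $\hat t_p(x^0,\dots,x^{p-1};y)=y+\sum\mu(x^j)$. $X(j),X(m,n)$: removal of entries. $C^{p,q}_r=\bigwedge^q\mathfrak g_p^*\otimes\bigwedge^r\mathfrak g^*\otimes W$ ($r\ge1$), $C^{p,q}_0=\bigwedge^q\mathfrak g_p^*\otimes V$, elements $\omega(\Xi;Z)$. $\delta^{(r)}\omega(\xi_0,\dots,\xi_q;Z)=\sum_j(-1)^j(\rho^{(r)}(\hat t_p(\xi_j))\omega(\Xi(j);\cdot))(Z)+\sum_{m<n}(-1)^{m+n}\omega([\xi_m,\xi_n],\Xi(m,n);Z)$, $(\rho^{(r)}(y)\beta)(x_1,\dots,x_r)=\rho_0^1(y)\beta(x_1,\dots,x_r)-\sum_k\beta(x_1,\dots,\mathcal L_yx_k,\dots,x_r)$. $\partial\omega(\Xi;Z)=\sum_{k=0}^{p+1}(-1)^k\omega(\partial_k\Xi;Z)$.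 $\delta_{(1)}\omega(\Xi;z_0,\dots,z_r)=\sum_k(-1)^k\rho_0^1(\mu(z_k))\omega(\Xi;Z(k))+\sum_{a<b}(-1)^{a+b}\omega(\Xi;[z_a,z_b],Z(a,b))$. $\Delta:C^{p,q}_r\to C^{p+1,q+1}_{r-1}$, $\Delta\omega(\xi_0,\dots,\xi_q;Z)=\sum_j(-1)^j\omega(\partial_0\Xi(j);x_j^0,Z)$ where $\xi_j=(x_j^0,\dots;y_j)$. $\Delta_2:C^{p,q}_r\to C^{p+1,q+2}_{r-2}$, $\Delta_2\omega(\xi_0,\dots,\xi_{q+1};Z)=\sum_{m<n}(-1)^{m+n}\omega(\partial_0\Xi(m,n);x_m^0,x_n^0,Z)$. *)

(* Defs.v *)
From HB Require Import structures.
From mathcomp Require Import all_boot all_order all_algebra.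
Set Implicit Arguments. Unset Strict Implicit. Unset Printing Implicit Defensive.
Import GRing.Theory.
Local Open Scope ring_scope.

Section Defs.
Variable K : fieldType.

Definition islin (A B : lmodType K) (f : A -> B) :=
  forall (a : K) (x y : A), f (a *: x + y) = a *: f x + f y.

Definition is_lie (A : lmodType K) (br : A -> A -> A) :=
  [/\ forall z, islin (fun x => br x z),
      forall x, islin (br x),
      forall x, br x x = 0 &
      forall x y z, br x (br y z) + br y (br z x) + br z (br x y) = 0].

Record crossed_module (G H : lmodType K) := CrossedModule {
  brG : G -> G -> G;
  brH : H -> H -> H;
  mu : G -> H;
  act : H -> G -> G;
  brG_lie : is_lie brG;
  brH_lie : is_lie brH;
  mu_lin : islin mu;
  mu_hom : forall x x', mu (brG x x') = brH (mu x) (mu x');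
  act_lin : forall x, islin (fun y => act y x);
  act_linx : forall y, islin (act y);
  act_der : forall y x x', act y (brG x x') = brG (act y x) x' + brG x (act y x');
  act_hom : forall y y' x, act (brH y y') x = act y (act y' x) - act y' (act y x);
  mu_equiv : forall y x, mu (act y x) = brH y (mu x);
  peiffer : forall x0 x1, act (mu x0) x1 = brG x0 x1
}.

Record two_rep (G H : lmodType K) (CM : crossed_module G H)
    (V W : lmodType K) (phi : W -> V) := TwoRep {
  rho01 : H -> W -> W;
  rho00 : H -> V -> V;
  rho1 : G -> V -> W;
  rho01_lin : forall w, islin (fun y => rho01 y w);
  rho01_linw : forall y, islin (rho01 y);
  rho00_lin : forall v, islin (fun y => rho00 y v);
  rho00_linv : forall y, islin (rho00 y);
  rho1_lin : forall v, islin (fun x => rho1 x v);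
  rho1_linv : forall x, islin (rho1 x);
  rho01_rep : forall y y' w,
    rho01 (brH CM y y') w = rho01 y (rho01 y' w) - rho01 y' (rho01 y w);
  rho00_rep : forall y y' v,
    rho00 (brH CM y y') v = rho00 y (rho00 y' v) - rho00 y' (rho00 y v);
  phi_equiv : forall y w, phi (rho01 y w) = rho00 y (phi w);
  rho1_br : forall x0 x1 v,
    rho1 (brG CM x0 x1) v = rho1 x0 (phi (rho1 x1 v)) - rho1 x1 (phi (rho1 x0 v));
  rho00_mu : forall x v, rho00 (mu CM x) v = phi (rho1 x v);
  rho01_mu : forall x w, rho01 (mu CM x) w = rho1 x (phi w);
  rho1_act : forall y x v,
    rho1 (act CM y x) v = rho01 y (rho1 x v) - rho1 x (rho00 y v)
}.

Section Ops.
Variables (G H W : lmodType K) (CM : crossed_module G H).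
Variable rho01 : H -> W -> W.

(* Elements (x^0,...,x^{p-1}; y) of g_p = g^p (+) h (g_0 = h); the length p is
   the size of the list gx. *)
Record gel := GEl { gx : seq G; gy : H }.
Definition gel0 : gel := GEl [::] 0.

Definition gadd (a b : gel) : gel :=
  GEl (mkseq (fun i => nth 0 (gx a) i + nth 0 (gx b) i) (size (gx a))) (gy a + gy b).
Definition gscale (c : K) (a : gel) : gel := GEl (map (fun x => c *: x) (gx a)) (c *: gy a).

(* Y_j = y + sum_{k>j} mu(x^k): second component of the j-th composable arrow *)
Definition Ycomp (a : gel) (j : nat) : H :=
  gy a + \sum_(j.+1 <= k < size (gx a)) mu CM (nth 0 (gx a) k).

(* Bracket of g_p via the identification with composable strings. *)
Definition gbr (a b : gel) : gel :=
  GEl (mkseq (fun j => brG CM (nth 0 (gx a) j) (nth 0 (gx b) j)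
                       + act CM (Ycomp a j) (nth 0 (gx b) j)
                       - act CM (Ycomp b j) (nth 0 (gx a) j)) (size (gx a)))
      (brH CM (gy a) (gy b)).

Definition that (a : gel) : H := gy a + \sum_(x <- gx a) mu CM x.

(* Face maps partial_k : g_{p+1} -> g_p, 0 <= k <= p+1. *)
Definition face0 (a : gel) : gel := GEl (behead (gx a)) (gy a).
Definition face (p k : nat) (a : gel) : gel :=
  if k == 0%N then face0 a
  else if (k <= p)%N then
    GEl (mkseq (fun i => if (i < k.-1)%N then nth 0 (gx a) i
                         else if i == k.-1 then nth 0 (gx a) i + nth 0 (gx a) i.+1
                         else nth 0 (gx a) i.+1) p) (gy a)
  else GEl (take p (gx a)) (gy a + mu CM (nth 0 (gx a) p)).

Definition rm (T : Type) (s : seq T) (j : nat) := take j s ++ drop j.+1 s.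
Definition rm2 (T : Type) (s : seq T) (m n : nat) := rm (rm s n) m.

Definition sgn (n : nat) : K := (-1) ^+ n.

(* Cochains: omega(Xi; Z) with Xi a list of q elements of g_p and Z a list of
   r elements of g; values in W (case r >= 1). *)
Definition cochain := seq gel -> seq G -> W.

Definition rhoR (y : H) (beta : seq G -> W) (Z : seq G) : W :=
  rho01 y (beta Z) - \sum_(k < size Z) beta (set_nth 0 Z k (act CM y (nth 0 Z k))).

Definition delta (om : cochain) : cochain := fun Xi Z =>
  \sum_(j < size Xi) sgn j *: rhoR (that (nth gel0 Xi j)) (om (rm Xi j)) Z
  + \sum_(m < size Xi) \sum_(n < size Xi | (m < n)%N)
      sgn (m + n) *: om (gbr (nth gel0 Xi m) (nth gel0 Xi n) :: rm2 Xi m n) Z.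

(* partial on cochains C^{p,q}_r -> C^{p+1,q}_r *)
Definition dpartial (p : nat) (om : cochain) : cochain := fun Xi Z =>
  \sum_(k < p.+2) sgn k *: om (map (face p k) Xi) Z.

Definition delta1 (om : cochain) : cochain := fun Xi Z =>
  \sum_(k < size Z) sgn k *: rho01 (mu CM (nth 0 Z k)) (om Xi (rm Z k))
  + \sum_(a < size Z) \sum_(b < size Z | (a < b)%N)
      sgn (a + b) *: om Xi (brG CM (nth 0 Z a) (nth 0 Z b) :: rm2 Z a b).

Definition Delta (om : cochain) : cochain := fun Xi Z =>
  \sum_(j < size Xi) sgn j *:
     om (map face0 (rm Xi j)) (nth 0 (gx (nth gel0 Xi j)) 0 :: Z).

Definition Delta2 (om : cochain) : cochain := fun Xi Z =>
  \sum_(m < size Xi) \sum_(n < size Xi | (m < n)%N) sgn (m + n) *: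
     om (map face0 (rm2 Xi m n))
        (nth 0 (gx (nth gel0 Xi m)) 0 :: nth 0 (gx (nth gel0 Xi n)) 0 :: Z).

Definition gel_size (p : nat) (a : gel) : bool := size (gx a) == p.

Definition is_cochain (p q r : nat) (om : cochain) : Prop :=
  forall (Xi : seq gel) (Z : seq G),
    size Xi = q -> all (gel_size p) Xi -> size Z = r ->
    [/\ forall (j : nat) (c : K) (a b : gel), (j < q)%N ->
          gel_size p a -> gel_size p b ->
          om (set_nth gel0 Xi j (gadd (gscale c a) b)) Z
          = c *: om (set_nth gel0 Xi j a) Z + om (set_nth gel0 Xi j b) Z,
        forall (k : nat) (c : K) (x x' : G), (k < r)%N ->
          om Xi (set_nth 0 Z k (c *: x + x'))
          = c *: om Xi (set_nth 0 Z k x) + om Xi (set_nth 0 Z k x'),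
        forall i j : nat, (i < j < q)%N -> nth gel0 Xi i = nth gel0 Xi j -> om Xi Z = 0 &
        forall i j : nat, (i < j < r)%N -> nth 0 Z i = nth 0 Z j -> om Xi Z = 0].

End Ops.
End Defs.

(* Main.v *)
Require Import Defs.
From HB Require Import structures.
From mathcomp Require Import all_boot all_order all_algebra.
From mathcomp Require Import zify.
Set Implicit Arguments. Unset Strict Implicit. Unset Printing Implicit Defensive.
Import GRing.Theory.
Local Open Scope ring_scope.

Section Lists.
Variable T : Type.
Implicit Types (s : seq T) (d x : T).

Lemma rm_cons0 x s : rm (x :: s) 0 = s.
Proof. by rewrite /rm /= drop0. Qed.
Lemma rm_consS x s j : rm (x :: s) j.+1 = x :: rm s j.
Proof. by []. Qed.
Lemma rm_nil j : rm ([::] : seq T) j = [::].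
Proof. by rewrite /rm; case: j. Qed.

Lemma nth_rm d s j i : nth d (rm s j) i = nth d s (bump j i).
Proof.
elim: s j i => [|x s IH] j i; first by rewrite rm_nil !nth_nil.
case: j => [|j]; first by rewrite rm_cons0 /bump /=.
case: i => [|i]; first by rewrite rm_consS /bump.
by rewrite rm_consS bumpS /= IH.
Qed.

Lemma size_rm s j : (j < size s)%N -> size (rm s j) = (size s).-1.
Proof.
elim: s j => [|x s IH] j //; case: j => [|j]; first by rewrite rm_cons0.
rewrite rm_consS /= ltnS => h; rewrite IH //; by case: (size s) h.
Qed.

Lemma map_rm (U : Type) (f : T -> U) s j : map f (rm s j) = rm (map f s) j.
Proof. by rewrite /rm map_cat map_take map_drop. Qed.

Lemma all_rm (P : pred T) s j : all P s -> all P (rm s j).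
Proof.
elim: s j => [|x s IH] j; first by rewrite rm_nil.
case: j => [|j] /andP[px ps]; first by rewrite rm_cons0.
by rewrite rm_consS /= px IH.
Qed.

Lemma rm_rm s j i : (j <= i)%N -> rm (rm s j) i = rm (rm s i.+1) j.
Proof.
elim: s j i => [|x s IH] j i; first by rewrite !rm_nil.
case: j => [|j] hji; first by rewrite rm_cons0 rm_consS rm_cons0.
case: i hji => [|i] // hji.
by rewrite !rm_consS IH.
Qed.

Lemma rm_rm_pair s j i :
  rm (rm s j) i = if (bump j i < j)%N then rm2 s (bump j i) j else rm2 s j (bump j i).
Proof.
rewrite /rm2 /bump; case: (leqP j i) => h.
  by rewrite add1n ltnNge (leqW h) /= rm_rm.
by rewrite add0n h.
Qed.

Lemma rm_set_nth d s b w : (b < size s)%N -> rm (set_nth d s b w) b = rm s b.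
Proof.
elim: s b => [|x s IH] b //; case: b => [|b] h; first by rewrite /= !rm_cons0.
by rewrite /= !rm_consS IH.
Qed.

Lemma set_nth_cat d P x M y : set_nth d (P ++ x :: M) (size P) y = P ++ y :: M.
Proof. by elim: P => //= a P ->. Qed.

Lemma nth_cat_size d P x M : nth d (P ++ x :: M) (size P) = x.
Proof. by rewrite nth_cat ltnn subnn. Qed.

Lemma size_set_nth_lt d s k y : (k < size s)%N -> size (set_nth d s k y) = size s.
Proof. by move=> h; rewrite size_set_nth; apply/maxn_idPr. Qed.
End Lists.

Lemma all_map_eq (T U : Type) (P : pred T) (f g : T -> U) s :
  all P s -> (forall x, P x -> f x = g x) -> map f s = map g s.
Proof. by elim: s => //= x s IH /andP[px ps] h; rewrite h // IH. Qed.

Lemma all_map_pred (T U : Type) (P : pred T) (Q : pred U) (f : T -> U) s :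
  all P s -> (forall x, P x -> Q (f x)) -> all Q (map f s).
Proof. by elim: s => //= x s IH /andP[px ps] h; rewrite h // IH. Qed.
Section Sums.
Variable K : fieldType.
Variable V : lmodType K.
Local Notation sg := (sgn K).

Lemma sgnD m n : sg (m + n) = sg m * sg n.
Proof. by rewrite /sgn exprD. Qed.
Lemma sgnS n : sg n.+1 = - sg n.
Proof. by rewrite /sgn exprS mulN1r. Qed.
Lemma sgn0 : sg 0 = 1.
Proof. by []. Qed.

Lemma sum_bump N i (F : nat -> V) : (i <= N)%N ->
  \sum_(0 <= k < N) F (bump i k) = \sum_(0 <= k < N.+1 | k != i) F k.
Proof.
move=> hi; have hi' : (i < N.+1)%N by [].
pose i0 := Ordinal hi'.
have e1 := @bigD1_ord V +%R 0 N.+1 i0 xpredT (fun k : 'I_N.+1 => F k) erefl.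
have e2 := @bigD1 V +%R 0 _ i0 xpredT (fun k : 'I_N.+1 => F k) erefl.
rewrite e2 /= in e1.
move/addrI: e1 => e1.
rewrite big_mkord big_mkord.
have -> : \sum_(k < N) F (bump i k) = \sum_(k < N) F (lift i0 k) by [].
rewrite -e1; apply: eq_bigl => k //.
Qed.

Lemma sum_pair_if N (F : nat -> nat -> V) :
  \sum_(0 <= m < N) \sum_(0 <= n < N | (m < n)%N) F m n =
  \sum_(0 <= m < N) \sum_(0 <= n < N) (if (m < n)%N then F m n else 0).
Proof. by apply: eq_bigr => m _; rewrite big_mkcond. Qed.

Lemma ifsplit (b : bool) (a : K) (x y : V) :
  (if b then a *: (x - y) else 0) = (if b then a *: x else 0) - (if b then a *: y else 0).
Proof. by case: b; rewrite ?scalerBr ?subr0. Qed.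

Lemma DL N (F : nat -> nat -> V) :
  \sum_(0 <= j < N.+1) sg j *: \sum_(0 <= i < N) sg i *: F j (bump j i)
  = \sum_(0 <= m < N.+1) \sum_(0 <= n < N.+1 | (m < n)%N) sg (m + n) *: (F n m - F m n).
Proof.
have step : forall j, (j < N.+1)%N -> sg j *: \sum_(0 <= i < N) sg i *: F j (bump j i)
   = \sum_(0 <= k < N.+1) (if k != j then sg j *: ((if (k < j)%N then sg k else - sg k) *: F j k) else 0).
  move=> j hj; rewrite -big_mkcond /= -sum_bump // scaler_sumr.
  apply: eq_bigr => i _; congr (_ *: (_ *: _)).
  rewrite /bump; case: (leqP j i) => h.
    by rewrite add1n ltnNge (leqW h) /= sgnS opprK.
  by rewrite /= h.
rewrite big_nat_cond (eq_bigr _ (fun j hj => step j (andP hj).1)) -big_nat_cond.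
rewrite sum_pair_if; symmetry.
transitivity (\sum_(0<=m<N.+1) \sum_(0<=n<N.+1) (if (m<n)%N then sg(m+n) *: F n m else 0) - \sum_(0<=m<N.+1) \sum_(0<=n<N.+1) (if (m<n)%N then sg(m+n) *: F m n else 0)).
  by rewrite -sumrB; apply: eq_bigr => m _; rewrite -sumrB; apply: eq_bigr => n _; exact: ifsplit.
rewrite exchange_big_nat -sumrB; apply: eq_bigr => j _.
rewrite -sumrB; apply: eq_bigr => k _.
case: (ltngtP k j) => h /=.
- by rewrite subr0 scalerA sgnD mulrC.
- by rewrite sub0r scalerA sgnD mulrN scaleNr.
- by rewrite subr0.
Qed.
End Sums.
Section Tri.
Variable K : fieldType.
Variable V : lmodType K.
Local Notation sg := (sgn K).

Lemma sg_mod x y : (x %% 2 = y %% 2)%N -> sg x = sg y.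
Proof.
rewrite !modn2 => h; rewrite /sgn -signr_odd -[in RHS]signr_odd.
by case: (odd x) (odd y) h => [] [].
Qed.

Lemma ltn_bump2 h i j : (bump h i < bump h j)%N = (i < j)%N.
Proof. by rewrite !ltnNge leq_bump2. Qed.

Lemma sum_bump_if N i (G : nat -> V) : (i <= N)%N ->
  \sum_(0 <= k < N) G (bump i k) = \sum_(0 <= k < N.+1) (if k != i then G k else 0).
Proof. by move=> h; rewrite sum_bump // big_mkcond. Qed.

Lemma unbump_neq m n k : (m < n)%N -> k != n -> (unbump n k != m) = (k != m).
Proof.
move=> h1 /eqP h2; rewrite /unbump; case: (ltnP n k) => h3 /=.
  by apply/idP/idP => _; apply/eqP; move: h1 h2 h3; clear; lia.
by rewrite subn0.
Qed.

Lemma sum_bump2 N m n (G : nat -> V) : (m < n)%N -> (n <= N.+1)%N ->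
  \sum_(0 <= i < N) G (bump n (bump m i))
  = \sum_(0 <= k < N.+2) (if (k != n) && (k != m) then G k else 0).
Proof.
move=> h1 h2.
rewrite (sum_bump_if (fun x => G (bump n x))); last by move: h1 h2; clear; lia.
transitivity (\sum_(0 <= k < N.+1) (fun k => if unbump n k != m then G k else 0) (bump n k)).
  by apply: eq_bigr => k _; rewrite /= bumpK.
rewrite (sum_bump_if (fun k => if unbump n k != m then G k else 0)) //.
apply: eq_bigr => k _.
case: eqP => [->|/eqP hk] //=.
by rewrite unbump_neq.
Qed.

Lemma sum_pair_bump N i (Phi : nat -> nat -> V) : (i <= N.+1)%N ->
  \sum_(0 <= m < N.+1) \sum_(0 <= n < N.+1 | (m < n)%N) Phi (bump i m) (bump i n)
  = \sum_(0 <= m < N.+2) \sum_(0 <= n < N.+2)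
       (if [&& m != i, n != i & (m < n)%N] then Phi m n else 0).
Proof.
move=> hi; rewrite sum_pair_if.
transitivity (\sum_(0 <= m < N.+1) (fun m => \sum_(0 <= n < N.+2)
     (if n != i then (if (m < n)%N then Phi m n else 0) else 0)) (bump i m)).
  apply: eq_bigr => m _ /=.
  rewrite -(sum_bump_if (fun n => if (bump i m < n)%N then Phi (bump i m) n else 0)) //.
  by apply: eq_bigr => n _; rewrite ltn_bump2.
rewrite (sum_bump_if (fun m => \sum_(0 <= n < N.+2)
     (if n != i then (if (m < n)%N then Phi m n else 0) else 0))) //.
apply: eq_bigr => m _.
case: eqP => [->|/eqP hm] /=; first by rewrite big1.
by apply: eq_bigr => n _; case: (n != i); case: (m < n)%N.
Qed.

Lemma tri_point m n k : (m < n)%N -> k != m -> k != n ->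
  sg (m + n) * sg (unbump m (unbump n k)).+1 + sg k * sg (unbump k m + unbump k n) = 0.
Proof.
move=> h /eqP h1 /eqP h2.
rewrite -!sgnD -(opprK (sg (k + _))) -sgnS; apply/eqP; rewrite subr_eq0.
apply/eqP/sg_mod; rewrite /unbump.
case: (ltnP n k) => a; case: (ltnP m (k - _)) => b; case: (ltnP k m) => c;
  case: (ltnP k n) => d; move: h h1 h2 a b c d; clear; rewrite /=; lia.
Qed.

Lemma TL N (F : nat -> nat -> nat -> V) :
  \sum_(0 <= m < N.+2) \sum_(0 <= n < N.+2 | (m < n)%N) sg (m + n) *:
      \sum_(0 <= i < N) sg i.+1 *: F m n (bump n (bump m i))
  + \sum_(0 <= i < N.+2) sg i *:
      \sum_(0 <= m < N.+1) \sum_(0 <= n < N.+1 | (m < n)%N)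
         sg (m + n) *: F (bump i m) (bump i n) i = 0.
Proof.
pose XA m n k := if (m < n)%N then (if (k != n) && (k != m) then
    sg (m + n) *: (sg (unbump m (unbump n k)).+1 *: F m n k) else 0) else 0.
pose XB m n k := sg k *: (if [&& m != k, n != k & (m < n)%N] then
    sg (unbump k m + unbump k n) *: F m n k else 0).
have eA : \sum_(0 <= m < N.+2) \sum_(0 <= n < N.+2 | (m < n)%N) sg (m + n) *:
      \sum_(0 <= i < N) sg i.+1 *: F m n (bump n (bump m i))
    = \sum_(0 <= m < N.+2) \sum_(0 <= n < N.+2) \sum_(0 <= k < N.+2) XA m n k.
  rewrite sum_pair_if; apply: eq_bigr => m _; apply: eq_big_nat => n /andP[_ hn].
  rewrite /XA; case: ifP => hmn; last by rewrite big1.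
  transitivity (sg (m + n) *: \sum_(0 <= i < N)
     (fun k => sg (unbump m (unbump n k)).+1 *: F m n k) (bump n (bump m i))).
    by congr (_ *: _); apply: eq_bigr => i _; rewrite /= !bumpK.
  rewrite (sum_bump2 (fun k => sg (unbump m (unbump n k)).+1 *: F m n k)) // scaler_sumr; apply: eq_bigr => k _.
  by case: ifP => //; rewrite scaler0.
have eB : \sum_(0 <= i < N.+2) sg i *:
      \sum_(0 <= m < N.+1) \sum_(0 <= n < N.+1 | (m < n)%N)
         sg (m + n) *: F (bump i m) (bump i n) i
    = \sum_(0 <= m < N.+2) \sum_(0 <= n < N.+2) \sum_(0 <= k < N.+2) XB m n k.
  transitivity (\sum_(0 <= i < N.+2) \sum_(0 <= m < N.+2) \sum_(0 <= n < N.+2) XB m n i).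
    apply: eq_big_nat => i /andP[_ hi].
    transitivity (sg i *: \sum_(0 <= m < N.+1) \sum_(0 <= n < N.+1 | (m < n)%N)
       (fun a b => sg (unbump i a + unbump i b) *: F a b i) (bump i m) (bump i n)).
      by congr (_ *: _); apply: eq_bigr => m _; apply: eq_bigr => n _; rewrite /= !bumpK.
    rewrite (sum_pair_bump (fun a b => sg (unbump i a + unbump i b) *: F a b i)) // scaler_sumr; apply: eq_bigr => m _.
    by rewrite scaler_sumr; apply: eq_bigr => n _; rewrite /XB.
  rewrite exchange_big_nat; apply: eq_bigr => m _.
  by rewrite exchange_big_nat.
rewrite eA eB -big_split /=; apply: big1_seq => m _.
rewrite -big_split /=; apply: big1_seq => n _.
rewrite -big_split /=; apply: big1_seq => k _.
rewrite /XA /XB; case: (ltnP m n) => hmn /=; last by rewrite !andbF scaler0 addr0.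
case: (eqVneq k n) => [->|hkn]; first by rewrite /= andbF scaler0 add0r.
case: (eqVneq k m) => [->|hkm]; first by rewrite /= ?andbF ?scaler0 ?add0r ?addr0.
have hmk : m != k by rewrite eq_sym.
have hnk : n != k by rewrite eq_sym.
rewrite ?hkn ?hkm ?hmk ?hnk /= !scalerA -scalerDl.
by rewrite (tri_point hmn hkm hkn) scale0r.
Qed.
End Tri.
Section Alg.
Variable K : fieldType.
Variables G H : lmodType K.
Variable CM : crossed_module G H.
Local Notation gel := (gel G H).
Local Notation gel0 := (gel0 G H).

Lemma islin_add (A B : lmodType K) (f : A -> B) : islin f -> forall x y, f (x + y) = f x + f y.
Proof. by move=> h x y; have := h 1 x y; rewrite !scale1r. Qed.
Lemma islin_0 (A B : lmodType K) (f : A -> B) : islin f -> f 0 = 0.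
Proof.
move=> h; have := islin_add h 0 0; rewrite addr0 => e.
by apply: (addrI (f 0)); rewrite addr0 -e.
Qed.
Lemma islin_scale (A B : lmodType K) (f : A -> B) : islin f -> forall c x, f (c *: x) = c *: f x.
Proof. by move=> h c x; have := h c x 0; rewrite !addr0 islin_0 // addr0. Qed.
Lemma islin_opp (A B : lmodType K) (f : A -> B) : islin f -> forall x, f (- x) = - f x.
Proof. by move=> h x; rewrite -scaleN1r islin_scale // scaleN1r. Qed.
Lemma islin_sub (A B : lmodType K) (f : A -> B) : islin f -> forall x y, f (x - y) = f x - f y.
Proof. by move=> h x y; rewrite islin_add // islin_opp. Qed.
Lemma islin_sum (A B : lmodType K) (f : A -> B) : islin f ->
  forall (I : Type) (r : seq I) (P : pred I) (F : I -> A),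
  f (\sum_(i <- r | P i) F i) = \sum_(i <- r | P i) f (F i).
Proof.
move=> h I r P F; elim/big_rec2: _ => [|i x y _ <-]; first exact: islin_0.
exact: islin_add.
Qed.

Lemma that_face0 (a : gel) : (0 < size (gx a))%N ->
  that CM a = that CM (face0 a) + mu CM (nth 0 (gx a) 0).
Proof.
case: a => [[|x xs] y] //= _.
by rewrite /that /= big_cons [mu CM x + _]addrC addrA.
Qed.

Lemma Ycomp0 (a : gel) : Ycomp CM a 0 = that CM (face0 a).
Proof.
case: a => [[|x xs] y]; rewrite /Ycomp /that /=.
  by rewrite big_geq // big_nil.
by congr (_ + _); rewrite [RHS](big_nth 0) big_add1.
Qed.

Lemma YcompS (a : gel) j : Ycomp CM a j.+1 = Ycomp CM (face0 a) j.
Proof.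
case: a => [[|x xs] y]; rewrite /Ycomp /=.
  by rewrite !big_geq.
by congr (_ + _); rewrite big_add1.
Qed.

Lemma face0_gbr (a b : gel) : face0 (gbr CM a b) = gbr CM (face0 a) (face0 b).
Proof.
case: a => [xa ya]; case: b => [xb yb]; rewrite /face0 /gbr /=; congr GEl.
case: xa => [|x xs] //=.
rewrite (_ : iota 1 _ = map (addn 1) (iota 0 (size xs))); last by rewrite -iotaDl.
rewrite -map_comp /mkseq.
by apply: eq_map => j /=; rewrite add1n !YcompS /= !nth_behead.
Qed.

Lemma gbr_0 (a b : gel) : (0 < size (gx a))%N ->
  nth 0 (gx (gbr CM a b)) 0 = brG CM (nth 0 (gx a) 0) (nth 0 (gx b) 0)
     + act CM (that CM (face0 a)) (nth 0 (gx b) 0) - act CM (that CM (face0 b)) (nth 0 (gx a) 0).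
Proof. by move=> h; rewrite /gbr /= nth_mkseq // !Ycomp0. Qed.

Lemma gel_size_face0 p (a : gel) : gel_size p.+1 a -> gel_size p (face0 a).
Proof. by case: a => [xs y]; rewrite /gel_size /= size_behead => /eqP ->. Qed.

Lemma gel_size_gbr p (a b : gel) : gel_size p a -> gel_size p (gbr CM a b).
Proof. by case: a => [xs y]; rewrite /gel_size /= size_mkseq. Qed.

End Alg.
Section Faces.
Variable K : fieldType.
Variables G H : lmodType K.
Variable CM : crossed_module G H.
Local Notation gel := (gel G H).

Lemma face_S0 p (a : gel) : face CM p.+1 0 a = face0 a.
Proof. by []. Qed.

Lemma face0_face1 p (a : gel) : gel_size p.+2 a ->
  face0 (face CM p.+1 1 a) = face0 (face0 a).
Proof.
case: a => [xs y]; rewrite /gel_size /= => /eqP hs.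
rewrite /face /= /face0 /=; f_equal.
apply: (@eq_from_nth _ 0); first by rewrite size_map size_iota !size_behead hs.
move=> i; rewrite size_map size_iota => hi.
by rewrite (nth_map 0) ?size_iota // nth_iota // add1n !nth_behead.
Qed.

Lemma face0_faceS p k (a : gel) : gel_size p.+2 a -> (2 <= k <= p.+2)%N ->
  face0 (face CM p.+1 k a) = face CM p k.-1 (face0 a).
Proof.
case: a => [xs y]; rewrite /gel_size /= => /eqP hs /andP[hk1 hk2].
case: k hk1 hk2 => [|[|k]] // _ hk2.
case: (ltnP k.+1 p.+1) => h.
  rewrite /face /= h (h : (k.+1 <= p)%N) /face0 /=; f_equal.
  apply: (@eq_from_nth _ 0); first by rewrite size_map size_iota size_mkseq.
  move=> i; rewrite size_map size_iota => hi.
  rewrite (nth_map 0) ?size_iota // nth_iota // add1n nth_mkseq //.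
  by rewrite !nth_behead ltnS eqSS.
have ek : k = p by move: h hk2; clear; lia.
subst k; rewrite /face /= !ltnn /face0 /=; f_equal.
  by case: xs hs => [|x xs] //=; case: xs => [|x' xs].
by rewrite nth_behead.
Qed.

Lemma face_nth0 p k (a : gel) : gel_size p.+2 a -> (k <= p.+2)%N ->
  nth 0 (gx (face CM p.+1 k a)) 0 =
  if k == 0%N then nth 0 (gx a) 1 else if k == 1%N then nth 0 (gx a) 0 + nth 0 (gx a) 1
  else nth 0 (gx a) 0.
Proof.
case: a => [xs y]; rewrite /gel_size /= => /eqP hs hk.
case: k hk => [|[|k]] hk.
- by rewrite /face /= nth_behead.
- by rewrite /face /=.
case: (ltnP k.+1 p.+1) => h.
  by rewrite /face /= h.
have ek : k = p by move: h hk; clear; lia.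
by subst k; rewrite /face /= !ltnn /= nth_take.
Qed.
End Faces.
Section Coch.
Variable K : fieldType.
Variables G H W : lmodType K.
Variable om : cochain G H W.
Variables p q r : nat.
Hypothesis hom : is_cochain p q r om.
Local Notation gel := (gel G H).

Lemma om_addZ (L : seq gel) (P M : seq G) x x' : size L = q -> all (gel_size p) L ->
  size (P ++ x :: M) = r ->
  om L (P ++ (x + x') :: M) = om L (P ++ x :: M) + om L (P ++ x' :: M).
Proof.
move=> hL hA hZ; have [_ hlin _ _] := hom hL hA hZ.
have hP : (size P < r)%N by rewrite -hZ size_cat /= addnS ltnS leq_addr.
by have := hlin (size P) 1 x x' hP; rewrite !set_nth_cat !scale1r.
Qed.

Lemma om_alt (L : seq gel) (P M : seq G) x : size L = q -> all (gel_size p) L ->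
  size (P ++ x :: x :: M) = r -> om L (P ++ x :: x :: M) = 0.
Proof.
move=> hL hA hZ; have [_ _ _ halt] := hom hL hA hZ.
apply: (halt (size P) (size P).+1).
  by rewrite ltnSn -hZ size_cat /= !addnS !ltnS leq_addr.
by rewrite !nth_cat ltnn ltnNge leqnSn /= subnn subSnn.
Qed.

Lemma om_swap (L : seq gel) (P M : seq G) u v : size L = q -> all (gel_size p) L ->
  size (P ++ u :: v :: M) = r ->
  om L (P ++ u :: v :: M) = - om L (P ++ v :: u :: M).
Proof.
move=> hL hA hZ.
have hZ' : forall a b, size (P ++ a :: b :: M) = r by move=> a b; rewrite -hZ !size_cat.
have e := om_alt (P := P) (M := M) (x := u + v) hL hA (hZ' _ _).
have e1 : forall a b c, om L (P ++ a :: (b + c) :: M) = om L (P ++ a :: b :: M) + om L (P ++ a :: c :: M).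
  move=> a b c; have := om_addZ (P := rcons P a) (M := M) (x := b) c hL hA.
  by rewrite -!cats1 -!catA /= => ->; rewrite // -hZ !size_cat.
rewrite om_addZ // e1 e1 !om_alt // add0r addr0 in e.
by apply/eqP; rewrite -addr_eq0 e.
Qed.

Lemma om_move (L : seq gel) k : size L = q -> all (gel_size p) L ->
  forall (P L' : seq G), size (P ++ L') = r -> (k < size L')%N ->
  om L (P ++ nth 0 L' k :: rm L' k) = sgn K k *: om L (P ++ L').
Proof.
move=> hL hA; elim: k => [|k IH] P L'.
  by case: L' => [|x L'] _ hk //; rewrite rm_cons0 sgn0 scale1r.
case: L' => [|x L'] hZ hk //.
have hk' : (k < size L')%N by [].
rewrite rm_consS /= om_swap //; last first.
  by rewrite -hZ !size_cat /= size_rm // prednK //; apply: leq_ltn_trans hk'.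
have -> : P ++ x :: nth 0 L' k :: rm L' k = rcons P x ++ nth 0 L' k :: rm L' k.
  by rewrite -cats1 -catA.
rewrite IH //; last by rewrite -hZ -cats1 -catA.
by rewrite sgnS scaleNr -cats1 -catA.
Qed.
End Coch.
Section Ops2.
Variable K : fieldType.
Variables G H W : lmodType K.
Variable CM : crossed_module G H.
Variable rho01 : H -> W -> W.
Local Notation gel := (gel G H).
Local Notation gel0 := (gel0 G H).
Local Notation sg := (sgn K).
Local Notation FZ := (@face0 K G H).

Lemma Delta_E (om : cochain G H W) Xi Z : Delta om Xi Z =
  \sum_(0 <= j < size Xi) sg j *: om (map FZ (rm Xi j)) (nth 0 (gx (nth gel0 Xi j)) 0 :: Z).
Proof. by rewrite /Delta big_mkord. Qed.

Lemma Delta2_E (om : cochain G H W) Xi Z : Delta2 om Xi Z =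
  \sum_(0 <= m < size Xi) \sum_(0 <= n < size Xi | (m < n)%N) sg (m + n) *:
     om (map FZ (rm2 Xi m n))
        (nth 0 (gx (nth gel0 Xi m)) 0 :: nth 0 (gx (nth gel0 Xi n)) 0 :: Z).
Proof. by rewrite /Delta2 big_mkord; apply: eq_bigr => m _; rewrite big_mkord. Qed.

Lemma dpartial_E p (om : cochain G H W) Xi Z : dpartial CM p om Xi Z =
  \sum_(0 <= k < p.+2) sg k *: om (map (face CM p k) Xi) Z.
Proof. by rewrite /dpartial big_mkord. Qed.

Lemma rhoR_E y (beta : seq G -> W) Z : rhoR CM rho01 y beta Z =
  rho01 y (beta Z) - \sum_(0 <= k < size Z) beta (set_nth 0 Z k (act CM y (nth 0 Z k))).
Proof. by rewrite /rhoR big_mkord. Qed.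

Lemma delta_E (om : cochain G H W) Xi Z : delta CM rho01 om Xi Z =
  \sum_(0 <= j < size Xi) sg j *: rhoR CM rho01 (that CM (nth gel0 Xi j)) (om (rm Xi j)) Z
  + \sum_(0 <= m < size Xi) \sum_(0 <= n < size Xi | (m < n)%N) sg (m + n) *:
      om (gbr CM (nth gel0 Xi m) (nth gel0 Xi n) :: rm2 Xi m n) Z.
Proof.
rewrite /delta big_mkord; congr (_ + _).
by rewrite big_mkord; apply: eq_bigr => m _; rewrite big_mkord.
Qed.

Lemma delta1_E (om : cochain G H W) Xi Z : delta1 CM rho01 om Xi Z =
  \sum_(0 <= k < size Z) sg k *: rho01 (mu CM (nth 0 Z k)) (om Xi (rm Z k))
  + \sum_(0 <= a < size Z) \sum_(0 <= b < size Z | (a < b)%N) sg (a + b) *: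
      om Xi (brG CM (nth 0 Z a) (nth 0 Z b) :: rm2 Z a b).
Proof.
rewrite /delta1 big_mkord; congr (_ + _).
by rewrite big_mkord; apply: eq_bigr => m _; rewrite big_mkord.
Qed.

Lemma nth_map_face0 (L : seq gel) i : nth gel0 (map FZ L) i = face0 (nth gel0 L i).
Proof. by elim: L i => [|x L IH] [|i] //=. Qed.

Lemma swap3 (a : nat -> K) (b : nat -> nat -> K) (F : nat -> nat -> nat -> W) n1 n2 :
  \sum_(0 <= k < n1) a k *: \sum_(0 <= m < n2) \sum_(0 <= n < n2 | (m < n)%N) b m n *: F k m n
  = \sum_(0 <= m < n2) \sum_(0 <= n < n2 | (m < n)%N) b m n *: \sum_(0 <= k < n1) a k *: F k m n.
Proof.
transitivity (\sum_(0 <= k < n1) \sum_(0 <= m < n2) \sum_(0 <= n < n2 | (m < n)%N) a k *: (b m n *: F k m n)).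
  by apply: eq_bigr => k _; rewrite scaler_sumr; apply: eq_bigr => m _; rewrite scaler_sumr.
rewrite exchange_big_nat; apply: eq_bigr => m _; rewrite exchange_big_nat.
apply: eq_bigr => n _; rewrite scaler_sumr; apply: eq_bigr => k _.
by rewrite !scalerA mulrC.
Qed.

End Ops2.
Lemma map_rm2 (T U : Type) (f : T -> U) s m n : map f (rm2 s m n) = rm2 (map f s) m n.
Proof. by rewrite /rm2 !map_rm. Qed.

Lemma size_rm2 (T : Type) (s : seq T) m n : (m < n)%N -> (n < size s)%N ->
  size (rm2 s m n) = (size s).-2.
Proof.
move=> h1 h2; rewrite /rm2 size_rm; first by rewrite size_rm.
by rewrite size_rm //; move: h1 h2; clear; lia.
Qed.

Lemma all_rm2 (T : Type) (P : pred T) s m n : all P s -> all P (rm2 s m n).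
Proof. by move=> h; rewrite /rm2; apply/all_rm/all_rm. Qed.

Lemma zmod_id2 (V : zmodType) (a b c d e : V) :
  - (a + (b - (a + c + (d + b)))) = d - - c.
Proof.
by rewrite opprD opprB [a + c + (d + b)]addrA addrK -addrA addKr opprK addrC.
Qed.

Lemma eq_bnc (R : Type) (idx : R) (op : R -> R -> R) a b (P : pred nat) (F1 F2 : nat -> R) :
  (forall i, (a <= i < b)%N -> P i -> F1 i = F2 i) ->
  \big[op/idx]_(a <= i < b | P i) F1 i = \big[op/idx]_(a <= i < b | P i) F2 i.
Proof.
move=> h; rewrite big_nat_cond [RHS]big_nat_cond.
by apply: eq_bigr => i /andP[h1 h2]; apply: h.
Qed.

Lemma zmod_id3 (V : zmodType) (a b c d s : V) :
  -(a + s + (d - ((a + b) + (c + d)) + - s)) = c - - b.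
Proof.
rewrite opprK [d - _ + _]addrC addrA addrK opprD opprB [a + b + (c + d)]addrA addrK.
by rewrite -!addrA addKr addrC.
Qed.

Section Id2.
Variable K : fieldType.
Variables G H W : lmodType K.
Variable CM : crossed_module G H.
Variable om : cochain G H W.
Variables p q r : nat.
Hypothesis hom : is_cochain p q r om.
Hypothesis hr : (2 < r)%N.
Local Notation gel := (gel G H).
Local Notation gel0 := (gel0 G H).
Local Notation sg := (sgn K).
Local Notation FZ := (@face0 K G H).

Lemma id2 (Xi : seq gel) (Z : seq G) :
  size Xi = q.+2 -> all (gel_size p.+2) Xi -> size Z = (r - 2)%N ->
  Delta (Delta om) Xi Z = - (Delta2 (dpartial CM p om) Xi Z + dpartial CM p.+1 (Delta2 om) Xi Z).
Proof.
move=> hs hA hZ.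
pose A0 i := nth 0 (gx (nth gel0 Xi i)) 0.
pose A1 i := nth 0 (gx (nth gel0 Xi i)) 1.
pose FF m n := map FZ (map FZ (rm2 Xi m n)).
pose Fd j k := om (map FZ (map FZ (if (k < j)%N then rm2 Xi k j else rm2 Xi j k))) (A1 k :: A0 j :: Z).
have hL : forall m n, (m < n)%N -> (n < q.+2)%N -> size (FF m n) = q /\ all (gel_size p) (FF m n).
  move=> m n h1 h2; rewrite /FF !size_map size_rm2 ?hs //; split => //.
  apply: (all_map_pred (P := gel_size p.+1)) => [|x]; last exact: gel_size_face0.
  apply: (all_map_pred (P := gel_size p.+2)) => [|x]; last exact: gel_size_face0.
  exact: all_rm2.
have hz2 : forall x y, size (x :: y :: Z) = r by move=> x y; rewrite /= hZ; move: hr; clear; lia.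
have eL : Delta (Delta om) Xi Z = \sum_(0 <= m < q.+2) \sum_(0 <= n < q.+2 | (m < n)%N)
     sg (m + n) *: (Fd n m - Fd m n).
  rewrite Delta_E hs -DL; apply: eq_big_nat => j /andP[_ hj].
  rewrite Delta_E size_map size_rm hs //=; congr (_ *: _); apply: eq_bigr => i _.
  by rewrite /Fd -rm_rm_pair -map_rm nth_map_face0 /= nth_behead nth_rm.
have hLL : forall m n, (m < n)%N -> (n < q.+2)%N -> all (gel_size p.+2) (rm2 Xi m n).
  by move=> m n _ _; apply: all_rm2.
have hXi : forall i, (i < q.+2)%N -> gel_size p.+2 (nth gel0 Xi i).
  by move=> i hi; apply: (all_nthP gel0 hA); rewrite hs.
pose B k i := nth 0 (gx (face CM p.+1 k (nth gel0 Xi i))) 0.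
pose Y m n k := om (map (face CM p k.+1) (map FZ (rm2 Xi m n))) (A0 m :: A0 n :: Z).
have eR : Delta2 (dpartial CM p om) Xi Z + dpartial CM p.+1 (Delta2 om) Xi Z =
   \sum_(0 <= m < q.+2) \sum_(0 <= n < q.+2 | (m < n)%N) sg (m + n) *:
     (\sum_(0 <= k < p.+2) sg k *: om (map (face CM p k) (map FZ (rm2 Xi m n))) (A0 m :: A0 n :: Z)
      + \sum_(0 <= k < p.+3) sg k *: om (map FZ (map (face CM p.+1 k) (rm2 Xi m n))) (B k m :: B k n :: Z)).
  rewrite Delta2_E dpartial_E hs.
  transitivity (\sum_(0 <= m < q.+2) \sum_(0 <= n < q.+2 | (m < n)%N) sg (m + n) *:
     \sum_(0 <= k < p.+2) sg k *: om (map (face CM p k) (map FZ (rm2 Xi m n))) (A0 m :: A0 n :: Z)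
   + \sum_(0 <= k < p.+3) sg k *: \sum_(0 <= m < q.+2) \sum_(0 <= n < q.+2 | (m < n)%N) sg (m + n) *:
     om (map FZ (map (face CM p.+1 k) (rm2 Xi m n))) (B k m :: B k n :: Z)).
    congr (_ + _).
      by apply: eq_bigr => m _; apply: eq_bigr => n _; rewrite dpartial_E.
    apply: eq_bigr => k _; congr (_ *: _); rewrite Delta2_E size_map hs.
    apply: eq_big_nat => m /andP[_ hm]; apply: eq_bnc => n /andP[_ hn] hmn.
    by rewrite -map_rm2 !(nth_map gel0) ?hs.
  rewrite swap3 -big_split; apply: eq_bigr => m _; rewrite -big_split.
  by apply: eq_bigr => n _; rewrite scalerDr.
rewrite eL eR -sumrN; apply: eq_big_nat => m /andP[_ hm]; rewrite -sumrN.
apply: eq_bnc => n /andP[_ hn] hmn; rewrite -scalerN; congr (_ *: _).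
have [hL1 hL2] := hL m n hmn hn.
have hnm : (n < m)%N = false by rewrite ltnNge (ltnW hmn).
have hmq : (m < q.+2)%N by apply: ltn_trans hn.
have e1 : \sum_(0 <= k < p.+2) sg k *: om (map (face CM p k) (map FZ (rm2 Xi m n))) (A0 m :: A0 n :: Z)
   = om (FF m n) (A0 m :: A0 n :: Z) + \sum_(0 <= k < p.+1) sg k.+1 *: Y m n k.
  by rewrite big_nat_recl // sgn0 scale1r.
have e2 : \sum_(0 <= k < p.+3) sg k *: om (map FZ (map (face CM p.+1 k) (rm2 Xi m n))) (B k m :: B k n :: Z)
   = om (FF m n) (A1 m :: A1 n :: Z) - om (FF m n) ((A0 m + A1 m) :: (A0 n + A1 n) :: Z)
     + \sum_(0 <= k < p.+1) - (sg k.+1 *: Y m n k).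
  rewrite big_nat_recl // big_nat_recl // sgn0 scale1r sgnS sgn0 scaleN1r addrA.
  congr (_ - _ + _).
  - by rewrite /B !face_nth0 ?hXi.
  - rewrite /B !face_nth0 ?hXi //= /FF -!map_comp (all_map_eq (g := FZ \o FZ) (hLL m n hmn hn)) //.
    by move=> x hx /=; rewrite face0_face1.
  apply: eq_big_nat => k /andP[_ hk].
  rewrite sgnS scaleNr; congr (- (_ *: _)).
  have hk2 : (k.+2 <= p.+2)%N by move: hk; clear; lia.
  rewrite /Y /B !face_nth0 ?hXi //=.
  rewrite -map_comp (all_map_eq (g := face CM p k.+1 \o FZ) (hLL m n hmn hn)) ?map_comp //.
  by move=> x hx /=; rewrite face0_faceS //; move: hk; clear; lia.
rewrite e1 e2 /Fd hmn hnm -/(FF m n) sumrN.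
have e3 := om_addZ hom (P := [::]) (M := A0 n + A1 n :: Z) (x := A0 m) (A1 m) hL1 hL2 (hz2 _ _).
have e4 := om_addZ hom (P := [:: A0 m]) (M := Z) (x := A0 n) (A1 n) hL1 hL2 (hz2 _ _).
have e5 := om_addZ hom (P := [:: A1 m]) (M := Z) (x := A0 n) (A1 n) hL1 hL2 (hz2 _ _).
have e6 := om_swap hom (P := [::]) (M := Z) (u := A1 n) (v := A0 m) hL1 hL2 (hz2 _ _).
rewrite /= in e3 e4 e5 e6.
by rewrite e3 e4 e5 e6 zmod_id3.
Qed.
End Id2.
Lemma R3_eq (T : Type) (d : T) (s : seq T) N i m n : size s = N.+2 -> (i < N.+2)%N ->
  (m < n)%N -> (n < N.+1)%N ->
  rm (rm2 s (bump i m) (bump i n)) (unbump (bump i m) (unbump (bump i n) i)) = rm2 (rm s i) m n.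
Proof.
move=> hs hi hmn hn.
have hb : (bump i m < bump i n)%N by rewrite ltn_bump2.
have hbn : (bump i n < size s)%N by rewrite hs /bump; move: hi hn; clear; lia.
have s1 : size (rm2 s (bump i m) (bump i n)) = N by rewrite size_rm2 // hs.
have s2 : size (rm s i) = N.+1 by rewrite size_rm hs.
apply: (@eq_from_nth _ d).
  rewrite size_rm s1; last by move: hi hmn hn; rewrite /bump /unbump; clear; lia.
  by rewrite size_rm2 ?s2.
by move=> k _; rewrite /rm2 !nth_rm; congr nth; move: hmn; clear; rewrite /bump /unbump; lia.
Qed.

Lemma pair_recl (V : zmodType) n (F : nat -> nat -> V) :
  \sum_(0 <= a < n.+1) \sum_(0 <= b < n.+1 | (a < b)%N) F a b
  = \sum_(0 <= b < n) F 0%N b.+1 + \sum_(0 <= a < n) \sum_(0 <= b < n | (a < b)%N) F a.+1 b.+1.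
Proof.
rewrite big_nat_recl //; congr (_ + _).
  by rewrite big_mkcond big_nat_recl //= add0r.
apply: eq_bigr => a _; rewrite big_mkcond big_nat_recl //= add0r.
by rewrite [RHS]big_mkcond.
Qed.
Section Abel.
Variable V : zmodType.
Inductive aex := AL of nat | AA of aex & aex | AN of aex | AZ.
Fixpoint aev (env : seq V) (e : aex) : V :=
  match e with AL n => nth 0 env n | AA a b => aev env a + aev env b
  | AN a => - aev env a | AZ => 0 end.
Fixpoint acoef (e : aex) (i : nat) : int :=
  match e with AL n => ((n == i) : nat)%:Z | AA a b => acoef a i + acoef b i
  | AN a => - acoef a i | AZ => 0 end.
Lemma aev_sum env e : aev env e = \sum_(0 <= i < size env) (nth 0 env i) *~ acoef e i.
Proof.
elim: e => [n|a IHa b IHb|a IHa|] /=.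
- case: (ltnP n (size env)) => h.
    have hn : n \in index_iota 0 (size env) by rewrite mem_index_iota.
    have hu : uniq (index_iota 0 (size env)) by rewrite /index_iota iota_uniq.
    rewrite (bigD1_seq n hn hu) /= eqxx mulr1z big1 ?addr0 // => i.
    by rewrite eq_sym => /negbTE ->; rewrite mulr0z.
  rewrite nth_default // big1_seq // => i; rewrite mem_index_iota => /andP[_ hi].
  by rewrite (_ : (n == i) = false) ?mulr0z //; apply/negbTE; move: h hi; clear; lia.
- by rewrite IHa IHb -big_split; apply: eq_bigr => i _; rewrite mulrzDr.
- by rewrite IHa -sumrN; apply: eq_bigr => i _; rewrite mulrNz.
- by rewrite big1 // => i _; rewrite mulr0z.
Qed.
Lemma abel_eq env e1 e2 :
  all (fun i => acoef e1 i == acoef e2 i) (index_iota 0 (size env)) -> aev env e1 = aev env e2.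
Proof.
move=> /allP h; rewrite !aev_sum; apply: eq_big_seq => i hi.
by rewrite (eqP (h i hi)).
Qed.
End Abel.

Ltac conv_abel t u := let _ := constr:(@erefl _ t : t = u) in idtac.
Ltac mem_leaf t l := lazymatch l with
  | nil => constr:(false)
  | cons ?u ?l' => match constr:(tt) with
                   | _ => let _ := constr:(@erefl _ t : t = u) in constr:(true)
                   | _ => mem_leaf t l' end end.
Ltac leaves_abel t acc := lazymatch t with
  | (?a + ?b)%R => let acc' := leaves_abel a acc in leaves_abel b acc'
  | (- ?a)%R => leaves_abel a acc
  | 0%R => acc
  | _ => let b := mem_leaf t acc in lazymatch b with true => acc | false => constr:(cons t acc) end
  end.
Ltac idx_abel t l := lazymatch l with
  | cons ?u ?l' => match constr:(tt) with
                   | _ => let _ := constr:(@erefl _ t : t = u) in constr:(0%N)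
                   | _ => let n := idx_abel t l' in constr:(S n) end end.
Ltac reify_abel env t := lazymatch t with
  | (?a + ?b)%R => let x := reify_abel env a in let y := reify_abel env b in constr:(AA x y)
  | (- ?a)%R => let x := reify_abel env a in constr:(AN x)
  | 0%R => constr:(AZ)
  | _ => let n := idx_abel t env in constr:(AL n)
  end.
Ltac abel := lazymatch goal with |- @eq ?T ?l ?r =>
  let e0 := leaves_abel l (@nil T) in let env := leaves_abel r e0 in
  let e1 := reify_abel env l in let e2 := reify_abel env r in
  change (aev env e1 = aev env e2); apply: abel_eq; vm_compute; reflexivity end.

Lemma zL1 (V : zmodType) (R1 R2 S1 S2 v : V) : (R1 + R2 - (S1 + S2)) - (R1 - (v + S1)) = R2 - S2 + v.
Proof. abel. Qed.
Section Coch2.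
Variable K : fieldType.
Variables G H W : lmodType K.
Variable om : cochain G H W.
Variables p q r : nat.
Hypothesis hom : is_cochain p q r om.
Local Notation gel := (gel G H).

Lemma om_subZ (L : seq gel) (P M : seq G) x y : size L = q -> all (gel_size p) L ->
  size (P ++ x :: M) = r ->
  om L (P ++ (x - y) :: M) = om L (P ++ x :: M) - om L (P ++ y :: M).
Proof.
move=> hL hA hZ; apply/eqP; rewrite eq_sym subr_eq -(om_addZ hom) //; last by rewrite -hZ !size_cat.
by rewrite subrK.
Qed.

Lemma om_addset (L : seq gel) (Z : seq G) k x x' : size L = q -> all (gel_size p) L ->
  size Z = r -> (k < r)%N ->
  om L (set_nth 0 Z k (x + x')) = om L (set_nth 0 Z k x) + om L (set_nth 0 Z k x').
Proof.
move=> hL hA hZ hk; have [_ hlin _ _] := hom hL hA hZ.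
by have := hlin k 1 x x' hk; rewrite !scale1r.
Qed.
End Coch2.

Lemma zmod_re (V : zmodType) (a b c d e : V) : (b + (a + d)) + (c + e) = a + b + c + (d + e).
Proof. by rewrite [a + b]addrC -!addrA; congr (_ + (_ + _)); rewrite addrCA. Qed.

Lemma swap4 (K : fieldType) (W : lmodType K) (al be : nat -> nat -> K)
  (F : nat -> nat -> nat -> nat -> W) n1 n2 :
  \sum_(0 <= a < n1) \sum_(0 <= b < n1 | (a < b)%N) al a b *:
     \sum_(0 <= m < n2) \sum_(0 <= n < n2 | (m < n)%N) be m n *: F a b m n
  = \sum_(0 <= m < n2) \sum_(0 <= n < n2 | (m < n)%N) be m n *:
     \sum_(0 <= a < n1) \sum_(0 <= b < n1 | (a < b)%N) al a b *: F a b m n.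
Proof.
transitivity (\sum_(0 <= a < n1) \sum_(0 <= b < n1 | (a < b)%N)
   \sum_(0 <= m < n2) \sum_(0 <= n < n2 | (m < n)%N) al a b *: (be m n *: F a b m n)).
  apply: eq_bigr => a _; apply: eq_bigr => b _; rewrite scaler_sumr.
  by apply: eq_bigr => m _; rewrite scaler_sumr.
under eq_bigr => a _ do rewrite exchange_big_nat.
rewrite exchange_big_nat; apply: eq_bigr => m _.
under eq_bigr => a _ do rewrite exchange_big_nat.
rewrite exchange_big_nat; apply: eq_bigr => n _.
rewrite scaler_sumr; apply: eq_bigr => a _; rewrite scaler_sumr; apply: eq_bigr => b _.
by rewrite !scalerA mulrC.
Qed.

Lemma sg_sq (K : fieldType) n : sgn K n * sgn K n = 1.
Proof. by rewrite -sgnD (@sg_mod K _ 0) //; rewrite addnn modn2 odd_double. Qed.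

Lemma sg_negv (K : fieldType) (V : lmodType K) x (v : V) : (x %% 2 = 1)%N -> sgn K x *: v = - v.
Proof. by move=> h; rewrite (@sg_mod K x 1) ?h // sgnS sgn0 scaleN1r. Qed.
Lemma sg_posv (K : fieldType) (V : lmodType K) x (v : V) : (x %% 2 = 0)%N -> sgn K x *: v = v.
Proof. by move=> h; rewrite (@sg_mod K x 0) ?h // sgn0 scale1r. Qed.

Section Id1.
Variable K : fieldType.
Variables G H W : lmodType K.
Variable CM : crossed_module G H.
Variable rho01 : H -> W -> W.
Hypothesis r_lin : forall w, islin (fun y => rho01 y w).
Hypothesis r_linw : forall y, islin (rho01 y).
Variable om : cochain G H W.
Variables p q r : nat.
Hypothesis hom : is_cochain p q r om.
Hypothesis hr : (2 < r)%N.
Local Notation gel := (gel G H).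
Local Notation gel0 := (gel0 G H).
Local Notation sg := (sgn K).
Local Notation FZ := (@face0 K G H).

Lemma rho_sum y (F : nat -> W) a b :
  rho01 y (\sum_(a <= i < b) sg i *: F i) = \sum_(a <= i < b) sg i *: rho01 y (F i).
Proof.
rewrite (islin_sum (r_linw y)); apply: eq_bigr => i _.
by rewrite (islin_scale (r_linw y)).
Qed.

Lemma id1 (Xi : seq gel) (Z : seq G) :
  size Xi = q.+2 -> all (gel_size p.+1) Xi -> size Z = r.-1 ->
  delta CM rho01 (Delta om) Xi Z + Delta (delta CM rho01 om) Xi Z
  = delta1 CM rho01 (Delta2 om) Xi Z - Delta2 (delta1 CM rho01 om) Xi Z.
Proof.
move=> hs hA hZ.
pose xi i := nth gel0 Xi i.
pose A i := nth 0 (gx (xi i)) 0.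
pose t i := that CM (FZ (xi i)).
pose pl j k := if (k < j)%N then rm2 Xi k j else rm2 Xi j k.
pose L2 m n := map FZ (rm2 Xi m n).
pose Pf j k := rho01 (that CM (xi j)) (om (map FZ (pl j k)) (A k :: Z))
   - \sum_(0 <= c < size Z) om (map FZ (pl j k))
        (A k :: set_nth 0 Z c (act CM (that CM (xi j)) (nth 0 Z c))).
pose Qf i k := rho01 (t k) (om (map FZ (pl i k)) (A i :: Z))
   - (om (map FZ (pl i k)) (act CM (t k) (A i) :: Z)
      + \sum_(0 <= c < size Z) om (map FZ (pl i k))
          (A i :: set_nth 0 Z c (act CM (t k) (nth 0 Z c)))).
pose R3 m n k := rm (rm2 Xi m n) (unbump m (unbump n k)).
pose Ft m n k := om (gbr CM (FZ (xi m)) (FZ (xi n)) :: map FZ (R3 m n k)) (A k :: Z).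
pose g0 m n := nth 0 (gx (gbr CM (xi m) (xi n))) 0.
have eP : \sum_(0 <= j < q.+2) sg j *: rhoR CM rho01 (that CM (xi j)) (Delta om (rm Xi j)) Z
   = \sum_(0 <= j < q.+2) sg j *: \sum_(0 <= i < q.+1) sg i *: Pf j (bump j i).
  apply: eq_big_nat => j /andP[_ hj]; congr (_ *: _).
  have eD : forall Z', Delta om (rm Xi j) Z' = \sum_(0 <= i < q.+1) sg i *:
      om (map FZ (pl j (bump j i))) (A (bump j i) :: Z').
    move=> Z'; rewrite Delta_E size_rm hs //; apply: eq_bigr => i _.
    by rewrite /pl -rm_rm_pair nth_rm.
  rewrite rhoR_E eD rho_sum.
  rewrite [X in _ - X](eq_bigr _ (fun c _ => eD _)).
  rewrite exchange_big_nat -sumrB; apply: eq_bigr => i _.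
  by rewrite -scaler_sumr -scalerBr.
have eQ : \sum_(0 <= i < q.+2) sg i *: \sum_(0 <= j < q.+1) sg j *:
     rhoR CM rho01 (that CM (nth gel0 (map FZ (rm Xi i)) j)) (om (rm (map FZ (rm Xi i)) j)) (A i :: Z)
   = \sum_(0 <= i < q.+2) sg i *: \sum_(0 <= j < q.+1) sg j *: Qf i (bump i j).
  apply: eq_bigr => i _; congr (_ *: _); apply: eq_bigr => j _; congr (_ *: _).
  rewrite nth_map_face0 nth_rm -map_rm rhoR_E /= big_nat_recl // /Qf /pl -rm_rm_pair.
  by [].
have eBa : \sum_(0 <= m < q.+2) \sum_(0 <= n < q.+2 | (m < n)%N) sg (m + n) *:
     Delta om (gbr CM (xi m) (xi n) :: rm2 Xi m n) Z
   = \sum_(0 <= m < q.+2) \sum_(0 <= n < q.+2 | (m < n)%N) sg (m + n) *: om (L2 m n) (g0 m n :: Z)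
   + \sum_(0 <= m < q.+2) \sum_(0 <= n < q.+2 | (m < n)%N) sg (m + n) *:
       \sum_(0 <= i < q) sg i.+1 *: Ft m n (bump n (bump m i)).
  rewrite -big_split; apply: eq_big_nat => m /andP[_ hm]; rewrite -big_split.
  apply: eq_bnc => n /andP[_ hn] hmn /=; rewrite -scalerDr; congr (_ *: _).
  rewrite Delta_E /= size_rm2 ?hs // big_nat_recl //; congr (_ + _).
    by rewrite rm_cons0 sgn0 scale1r.
  apply: eq_bigr => i _; rewrite rm_consS /= face0_gbr /Ft /R3 !bumpK.
  by rewrite /rm2 !nth_rm.
have eBb : \sum_(0 <= i < q.+2) sg i *: \sum_(0 <= m < q.+1) \sum_(0 <= n < q.+1 | (m < n)%N)
     sg (m + n) *: om (gbr CM (nth gel0 (map FZ (rm Xi i)) m) (nth gel0 (map FZ (rm Xi i)) n)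
        :: rm2 (map FZ (rm Xi i)) m n) (A i :: Z)
   = \sum_(0 <= i < q.+2) sg i *: \sum_(0 <= m < q.+1) \sum_(0 <= n < q.+1 | (m < n)%N)
     sg (m + n) *: Ft (bump i m) (bump i n) i.
  apply: eq_big_nat => i /andP[_ hi]; congr (_ *: _); apply: eq_bigr => m _.
  apply: eq_bnc => n /andP[_ hn] hmn; congr (_ *: _).
  by rewrite !nth_map_face0 !nth_rm -map_rm2 /Ft /R3 (R3_eq gel0 (N := q)).
have eLHS : delta CM rho01 (Delta om) Xi Z + Delta (delta CM rho01 om) Xi Z
   = \sum_(0 <= m < q.+2) \sum_(0 <= n < q.+2 | (m < n)%N) sg (m + n) *:
       (om (L2 m n) (g0 m n :: Z) + (Pf n m - Pf m n) + (Qf n m - Qf m n)).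
  rewrite delta_E Delta_E hs.
  transitivity ((\sum_(0 <= j < q.+2) sg j *: rhoR CM rho01 (that CM (xi j)) (Delta om (rm Xi j)) Z
     + \sum_(0 <= m < q.+2) \sum_(0 <= n < q.+2 | (m < n)%N) sg (m + n) *:
     Delta om (gbr CM (xi m) (xi n) :: rm2 Xi m n) Z)
     + (\sum_(0 <= i < q.+2) sg i *: \sum_(0 <= j < q.+1) sg j *:
     rhoR CM rho01 (that CM (nth gel0 (map FZ (rm Xi i)) j)) (om (rm (map FZ (rm Xi i)) j)) (A i :: Z)
     + \sum_(0 <= i < q.+2) sg i *: \sum_(0 <= m < q.+1) \sum_(0 <= n < q.+1 | (m < n)%N)
     sg (m + n) *: om (gbr CM (nth gel0 (map FZ (rm Xi i)) m) (nth gel0 (map FZ (rm Xi i)) n)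
        :: rm2 (map FZ (rm Xi i)) m n) (A i :: Z))).
    congr (_ + _); rewrite -big_split; apply: eq_big_nat => i /andP[_ hi].
    by rewrite /= -scalerDr delta_E size_map size_rm hs.
  rewrite eP eBa eQ eBb !DL zmod_re (TL q Ft) addr0.
  rewrite -!big_split; apply: eq_bigr => m _; rewrite -!big_split; apply: eq_bigr => n _.
  by rewrite /= -!scalerDr.
have hXi : forall i, (i < q.+2)%N -> gel_size p.+1 (xi i).
  by move=> i hi; apply: (all_nthP gel0 hA); rewrite hs.
have hL : forall m n, (m < n)%N -> (n < q.+2)%N -> size (L2 m n) = q /\ all (gel_size p) (L2 m n).
  move=> m n h1 h2; rewrite /L2 !size_map size_rm2 ?hs //; split => //.
  apply: (all_map_pred (P := gel_size p.+1)) => [|x]; last exact: gel_size_face0.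
  exact: all_rm2.
have hz1 : forall x, size (x :: Z) = r by move=> x; rewrite /= hZ; move: hr; clear; lia.
pose Tgt m n := om (L2 m n) (brG CM (A m) (A n) :: Z)
   + rho01 (mu CM (A n)) (om (L2 m n) (A m :: Z))
   - \sum_(0 <= c < size Z) om (L2 m n) (A m :: set_nth 0 Z c (brG CM (A n) (nth 0 Z c)))
   - rho01 (mu CM (A m)) (om (L2 m n) (A n :: Z))
   + \sum_(0 <= c < size Z) om (L2 m n) (A n :: set_nth 0 Z c (brG CM (A m) (nth 0 Z c))).
pose K1 m n := \sum_(0 <= k < size Z) sg k *: rho01 (mu CM (nth 0 Z k)) (om (L2 m n) (A m :: A n :: rm Z k)).
pose K2 m n := \sum_(0 <= a < size Z) \sum_(0 <= b < size Z | (a < b)%N) sg (a + b) *: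
   om (L2 m n) (A m :: A n :: brG CM (nth 0 Z a) (nth 0 Z b) :: rm2 Z a b).
have eR1 : delta1 CM rho01 (Delta2 om) Xi Z =
   \sum_(0 <= m < q.+2) \sum_(0 <= n < q.+2 | (m < n)%N) sg (m + n) *: (K1 m n + K2 m n).
  rewrite delta1_E.
  transitivity (\sum_(0 <= m < q.+2) \sum_(0 <= n < q.+2 | (m < n)%N) sg (m + n) *: K1 m n
     + \sum_(0 <= m < q.+2) \sum_(0 <= n < q.+2 | (m < n)%N) sg (m + n) *: K2 m n); last first.
    rewrite -big_split; apply: eq_bigr => m _; rewrite -big_split; apply: eq_bigr => n _.
    by rewrite /= scalerDr.
  congr (_ + _).
    rewrite /K1 -swap3; apply: eq_bigr => k _; congr (_ *: _).
    rewrite Delta2_E hs (islin_sum (r_linw _)); apply: eq_bigr => m _.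
    rewrite (islin_sum (r_linw _)); apply: eq_bigr => n _.
    by rewrite (islin_scale (r_linw _)).
  rewrite /K2 -swap4; apply: eq_bigr => a _; apply: eq_bigr => b _; congr (_ *: _).
  by rewrite Delta2_E hs.
have eR2 : Delta2 (delta1 CM rho01 om) Xi Z = \sum_(0 <= m < q.+2) \sum_(0 <= n < q.+2 | (m < n)%N)
   sg (m + n) *: delta1 CM rho01 om (L2 m n) (A m :: A n :: Z).
  by rewrite Delta2_E hs.
have eRHS : delta1 CM rho01 (Delta2 om) Xi Z - Delta2 (delta1 CM rho01 om) Xi Z
   = \sum_(0 <= m < q.+2) \sum_(0 <= n < q.+2 | (m < n)%N) sg (m + n) *: Tgt m n.
  rewrite eR1 eR2 -sumrB; apply: eq_big_nat => m /andP[_ hm]; rewrite -sumrB.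
  apply: eq_bnc => n /andP[_ hn] hmn; rewrite -scalerBr; congr (_ *: _).
  have [hL1 hL2] := hL m n hmn hn.
  have hmove1 : forall x w b, (b < size Z)%N ->
      om (L2 m n) (w :: x :: rm Z b) = sg b.+1 *: om (L2 m n) (x :: set_nth 0 Z b w).
    move=> x w b hb.
    have hsz : size ([::] ++ x :: set_nth 0 Z b w) = r by rewrite /= size_set_nth_lt //; exact: (hz1 x).
    have := om_move hom (k := b.+1) hL1 hL2 hsz; rewrite rm_consS rm_set_nth //= nth_set_nth /= eqxx.
    by apply; rewrite size_set_nth_lt.
  have hmove2 : forall x y c M, size (x :: y :: c :: M) = r ->
      om (L2 m n) (c :: x :: y :: M) = om (L2 m n) (x :: y :: c :: M).
    move=> x y c M hsz.
    have := om_move hom (k := 2) hL1 hL2 (P := [::]) (L' := x :: y :: c :: M) hsz.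
    rewrite rm_consS rm_consS rm_cons0 /sgn expr2 mulrNN mulr1 scale1r /=.
    by move=> ->.
  rewrite delta1_E /= big_nat_recl // big_nat_recl // (pair_recl (size Z).+1).
  rewrite (pair_recl (size Z) (fun a b => sg (a.+1 + b.+1) *: om (L2 m n)
     (brG CM (nth 0 (A m :: A n :: Z) a.+1) (nth 0 (A m :: A n :: Z) b.+1) :: rm2 (A m :: A n :: Z) a.+1 b.+1))).
  rewrite big_nat_recl //.
  set w := [:: A m, A n & Z].
  have f1 : \sum_(0 <= i < size Z) sg i.+2 *: rho01 (mu CM (nth 0 w i.+2)) (om (L2 m n) (rm w i.+2))
      = K1 m n.
    by apply: eq_bigr => i _; rewrite /w !rm_consS /= !sgnS opprK.
  have f2 : \sum_(0 <= i < size Z) sg (0 + i.+2) *: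
      om (L2 m n) (brG CM (nth 0 w 0) (nth 0 w i.+2) :: rm2 w 0 i.+2)
      = - \sum_(0 <= c < size Z) om (L2 m n) (A n :: set_nth 0 Z c (brG CM (A m) (nth 0 Z c))).
    rewrite -sumrN; apply: eq_big_nat => i /andP[_ hi].
    rewrite /w /rm2 !rm_consS rm_cons0 /= hmove1 // scalerA -sgnD sg_negv //; clear; lia.
  have f3 : \sum_(0 <= b < size Z) sg (1 + b.+2) *:
      om (L2 m n) (brG CM (nth 0 w 1) (nth 0 w b.+2) :: rm2 w 1 b.+2)
      = \sum_(0 <= c < size Z) om (L2 m n) (A m :: set_nth 0 Z c (brG CM (A n) (nth 0 Z c))).
    apply: eq_big_nat => i /andP[_ hi].
    rewrite /w /rm2 !rm_consS rm_cons0 /= hmove1 // scalerA -sgnD sg_posv //; clear; lia.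
  have f4 : \sum_(0 <= a < size Z) \sum_(0 <= b < size Z | (a < b)%N) sg (a.+2 + b.+2) *:
      om (L2 m n) (brG CM (nth 0 w a.+2) (nth 0 w b.+2) :: rm2 w a.+2 b.+2) = K2 m n.
    apply: eq_big_nat => a /andP[_ ha]; apply: eq_bnc => b /andP[_ hb] hab.
    rewrite /w /rm2 !rm_consS /= hmove2; last first.
      by rewrite /= size_rm2 // hZ; move: hr hab hb; clear; lia.
    by congr (_ *: _); apply: sg_mod; clear; lia.
  rewrite f1 f2 f3 f4 {f1 f2 f3 f4} /w rm_cons0 rm_consS rm_cons0 /rm2 rm_consS !rm_cons0 /=.
  rewrite sgn0 sgnS sgn0 !scale1r !scaleN1r /Tgt.
  abel.
rewrite eLHS eRHS; apply: eq_big_nat => m /andP[_ hm]; apply: eq_bnc => n /andP[_ hn] hmn.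
congr (_ *: _).
have [hL1 hL2] := hL m n hmn hn.
have hnm : (n < m)%N = false by rewrite ltnNge (ltnW hmn).
have hmq : (m < q.+2)%N by apply: ltn_trans hn.
have hsm : (0 < size (gx (xi m)))%N by move: (hXi m hmq); rewrite /gel_size => /eqP ->.
have hsn : (0 < size (gx (xi n)))%N by move: (hXi n hn); rewrite /gel_size => /eqP ->.
rewrite /Pf /Qf /pl hmn hnm -/(L2 m n) /g0 gbr_0 //.
rewrite -/(A m) -/(A n) -/(t m) -/(t n).
rewrite (that_face0 CM hsm) (that_face0 CM hsn) -/(A m) -/(A n) -/(t m) -/(t n).
rewrite !(islin_add (r_lin _)).
have eS : forall a b x, \sum_(0 <= c < size Z) om (L2 m n) (a :: set_nth 0 Z c (act CM (x + mu CM b) (nth 0 Z c)))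
   = \sum_(0 <= c < size Z) om (L2 m n) (a :: set_nth 0 Z c (act CM x (nth 0 Z c)))
   + \sum_(0 <= c < size Z) om (L2 m n) (a :: set_nth 0 Z c (brG CM b (nth 0 Z c))).
  move=> a b x; rewrite -big_split; apply: eq_big_nat => c /andP[_ hc] /=.
  rewrite (islin_add (act_lin CM _)) peiffer.
  have := om_addset hom (Z := a :: Z) (k := c.+1) (act CM x (nth 0 Z c)) (brG CM b (nth 0 Z c)) hL1 hL2 (hz1 a).
  by rewrite /= => ->; rewrite // -(hz1 a).
rewrite !eS.
have e3 := om_subZ hom (P := [::]) (M := Z) (x := brG CM (A m) (A n) + act CM (t m) (A n))
   (act CM (t n) (A m)) hL1 hL2 (hz1 _).
have e4 := om_addZ hom (P := [::]) (M := Z) (x := brG CM (A m) (A n)) (act CM (t m) (A n))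
   hL1 hL2 (hz1 _).
rewrite /= in e3 e4; rewrite e3 e4 /Tgt.
abel.
Qed.
End Id1.

Theorem mainTheorem14 (K : fieldType) (G H : lmodType K) (CM : crossed_module G H)
    (V W : lmodType K) (phi : W -> V) (phi_lin : islin phi)
    (rho : two_rep CM phi) (p q r : nat) (hr : (2 < r)%N)
    (om : cochain G H W) (hom : is_cochain p q r om) :
  (forall (Xi : seq (gel G H)) (Z : seq G),
     size Xi = q.+2 -> all (gel_size p.+1) Xi -> size Z = r.-1 ->
     delta CM (rho01 rho) (Delta om) Xi Z + Delta (delta CM (rho01 rho) om) Xi Z
     = delta1 CM (rho01 rho) (Delta2 om) Xi Z - Delta2 (delta1 CM (rho01 rho) om) Xi Z)
  /\
  (forall (Xi : seq (gel G H)) (Z : seq G),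
     size Xi = q.+2 -> all (gel_size p.+2) Xi -> size Z = (r - 2)%N ->
     Delta (Delta om) Xi Z
     = - (Delta2 (dpartial CM p om) Xi Z + dpartial CM p.+1 (Delta2 om) Xi Z)).
Proof.
split.
- move=> Xi Z hs hA hZ.
  exact: (id1 CM (rho01_lin rho) (rho01_linw rho) hom hr hs hA hZ).
- move=> Xi Z hs hA hZ.
  exact: (id2 CM hom hr hs hA hZ).
Qed.
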